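(* Under the hypotheses of Proposition 5.1 (namely: $X$ a real separable Hilbert space, $F:X\to X$ monotone and hemicontinuous, $F(x^\dagger)=y$, $\bar x\in X$, $F$ Fréchet differentiable on $\mathcal B_r(x^\dagger)$ with $r>\|x^\dagger-\bar x\|$ and $x\mapsto F'(x)$ continuous there, the nonlinearity condition $(F'(\tilde x)-F'(x))v=F'(x)g(\tilde x,x,v)$ with $\|g(\tilde x,x,v)\|\le k_0\|\tilde x-x\|\|v\|$ for all $\tilde x,x\in\mathcal B_r(x^\dagger)$, $v\in X$, and $k_0\|x^\dagger-\bar x\|<2$), if moreover $x^\dagger-\bar x\perp\mathcal N(F'(x^\dagger))$, then $\lim_{\alpha\to0}\|x_\alpha-x^\dagger\|=0$, where $x_\alpha$ solves $F(x_\alpha)+\alpha(x_\alpha-\bar x)=y$.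
   Context: Monotone: $\langle F(x)-F(\tilde x),x-\tilde x\rangle\ge0$; hemicontinuous: $t\mapsto\langle F(x+tv),z\rangle$ continuous on $[0,1]$. $\mathcal N(\cdot)$ denotes the null space; $\mathcal B_r(x^\dagger)$ the closed ball of radius $r$ around $x^\dagger$. *)

(* Defs.v *)
From Stdlib Require Import Reals Lra.
Open Scope R_scope.

Record PreHilbert := {
  hcar :> Type;
  hzero : hcar;
  hadd : hcar -> hcar -> hcar;
  hopp : hcar -> hcar;
  hscal : R -> hcar -> hcar;
  hinner : hcar -> hcar -> R;
  hadd_assoc : forall x y z, hadd x (hadd y z) = hadd (hadd x y) z;
  hadd_comm : forall x y, hadd x y = hadd y x;
  hadd_zero : forall x, hadd x hzero = x;
  hadd_opp : forall x, hadd x (hopp x) = hzero;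
  hscal_one : forall x, hscal 1 x = x;
  hscal_assoc : forall a b x, hscal a (hscal b x) = hscal (a * b) x;
  hscal_distr_v : forall a x y, hscal a (hadd x y) = hadd (hscal a x) (hscal a y);
  hscal_distr_s : forall a b x, hscal (a + b) x = hadd (hscal a x) (hscal b x);
  hinner_sym : forall x y, hinner x y = hinner y x;
  hinner_add_l : forall x y z, hinner (hadd x y) z = hinner x z + hinner y z;
  hinner_scal_l : forall a x y, hinner (hscal a x) y = a * hinner x y;
  hinner_pos : forall x, 0 <= hinner x x;
  hinner_def : forall x, hinner x x = 0 -> x = hzero
}.

Section Ops.
Context {X : PreHilbert}.
Definition hsub (x y : X) : X := hadd X x (hopp X y).
Definition hnorm (x : X) : R := sqrt (hinner X x x).
Definition in_ball (c : X) (r : R) (x : X) : Prop := hnorm (hsub x c) <= r.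
End Ops.

Definition complete (X : PreHilbert) : Prop :=
  forall u : nat -> X,
    (forall eps, 0 < eps -> exists N, forall m n, (N <= m)%nat -> (N <= n)%nat ->
        hnorm (hsub (u m) (u n)) < eps) ->
    exists l : X, forall eps, 0 < eps -> exists N, forall n, (N <= n)%nat ->
        hnorm (hsub (u n) l) < eps.

Definition separable (X : PreHilbert) : Prop :=
  exists d : nat -> X, forall (x : X) eps, 0 < eps -> exists n, hnorm (hsub x (d n)) < eps.

Definition separable_hilbert (X : PreHilbert) : Prop := complete X /\ separable X.

Definition monotone {X : PreHilbert} (F : X -> X) : Prop :=
  forall x x' : X, 0 <= hinner X (hsub (F x) (F x')) (hsub x x').

Definition hemicontinuous {X : PreHilbert} (F : X -> X) : Prop :=
  forall x v z : X, forall t0, 0 <= t0 <= 1 ->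
    forall eps, 0 < eps -> exists delta, 0 < delta /\
      forall t, 0 <= t <= 1 -> Rabs (t - t0) < delta ->
        Rabs (hinner X (F (hadd X x (hscal X t v))) z
              - hinner X (F (hadd X x (hscal X t0 v))) z) < eps.

Definition bounded_linear {X : PreHilbert} (A : X -> X) : Prop :=
  (forall x y, A (hadd X x y) = hadd X (A x) (A y)) /\
  (forall a x, A (hscal X a x) = hscal X a (A x)) /\
  (exists C, forall x, hnorm (A x) <= C * hnorm x).

Definition frechet_deriv_at {X : PreHilbert} (F : X -> X) (x : X) (A : X -> X) : Prop :=
  bounded_linear A /\
  forall eps, 0 < eps -> exists delta, 0 < delta /\
    forall h : X, hnorm h < delta ->
      hnorm (hsub (hsub (F (hadd X x h)) (F x)) (A h)) <= eps * hnorm h.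

Definition C1_on_ball {X : PreHilbert} (F : X -> X) (DF : X -> X -> X) (c : X) (r : R) : Prop :=
  (forall x, in_ball c r x -> frechet_deriv_at F x (DF x)) /\
  (forall x, in_ball c r x -> forall eps, 0 < eps -> exists delta, 0 < delta /\
     forall x', in_ball c r x' -> hnorm (hsub x' x) < delta ->
       forall v, hnorm (hsub (DF x' v) (DF x v)) <= eps * hnorm v).

Definition nonlinearity_condition {X : PreHilbert} (DF : X -> X -> X) (c : X) (r k0 : R) : Prop :=
  exists g : X -> X -> X -> X,
    forall xt x v : X, in_ball c r xt -> in_ball c r x ->
      hsub (DF xt v) (DF x v) = DF x (g xt x v) /\
      hnorm (g xt x v) <= k0 * hnorm (hsub xt x) * hnorm v.

(* Main.v *)
Require Import Defs.
From Stdlib Require Import Reals Lra Lia ClassicalEpsilon Classical.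
Open Scope R_scope.

Lemma hscal0 {X : PreHilbert} (x : X) : hscal X 0 x = hzero X.
Proof.
  assert (H : hscal X 0 x = hadd X (hscal X 0 x) (hscal X 0 x)).
  { rewrite <- hscal_distr_s. f_equal. ring. }
  set (u := hscal X 0 x) in *.
  rewrite <- (hadd_opp X u). rewrite H at 2.
  rewrite <- hadd_assoc, hadd_opp, hadd_zero. reflexivity.
Qed.

Lemma izl {X : PreHilbert} (y : X) : hinner X (hzero X) y = 0.
Proof. rewrite <- (hscal0 y), hinner_scal_l. ring. Qed.

Lemma iol {X : PreHilbert} (x y : X) : hinner X (hopp X x) y = - hinner X x y.
Proof.
  assert (H := hinner_add_l X x (hopp X x) y).
  rewrite hadd_opp, izl in H. lra.
Qed.

Lemma iar {X : PreHilbert} (x y z : X) : hinner X x (hadd X y z) = hinner X x y + hinner X x z.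
Proof. rewrite !(hinner_sym X x). apply hinner_add_l. Qed.
Lemma isr {X : PreHilbert} a (x y : X) : hinner X x (hscal X a y) = a * hinner X x y.
Proof. rewrite !(hinner_sym X x). apply hinner_scal_l. Qed.
Lemma ior {X : PreHilbert} (x y : X) : hinner X x (hopp X y) = - hinner X x y.
Proof. rewrite !(hinner_sym X x). apply iol. Qed.
Lemma izr {X : PreHilbert} (y : X) : hinner X y (hzero X) = 0.
Proof. rewrite hinner_sym. apply izl. Qed.

Ltac expand := unfold hsub in *;
  repeat (rewrite ?hinner_add_l, ?hinner_scal_l, ?iol, ?izl, ?iar, ?isr, ?ior, ?izr in *).

Lemma hnorm_ge0 {X : PreHilbert} (x : X) : 0 <= hnorm x.
Proof. apply sqrt_pos. Qed.
Lemma hnorm_sq {X : PreHilbert} (x : X) : hnorm x * hnorm x = hinner X x x.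
Proof. apply sqrt_sqrt, hinner_pos. Qed.

Lemma quad (A B C : R) : 0 <= C -> (forall t, 0 <= A - 2*t*B + t*t*C) -> B*B <= A*C.
Proof.
  intros HC H. destruct (Req_dec C 0) as [E|E].
  - subst. destruct (Req_dec B 0) as [E|E]. subst. specialize (H 0). nra.
    specialize (H ((A+1)/(2*B))). exfalso.
    assert (2*((A+1)/(2*B))*B = A+1) by (field; auto). nra.
  - specialize (H (B/C)).
    assert (2*(B/C)*B = 2*(B*B)/C) by (field; auto).
    assert ((B/C)*(B/C)*C = (B*B)/C) by (field; auto).
    assert (0 < C) by lra.
    assert (B*B/C <= A) by lra.
    apply Rmult_le_reg_r with (/C). apply Rinv_0_lt_compat; lra.
    replace (A*C*/C) with A by (field; auto). lra.
Qed.

Lemma CS {X : PreHilbert} (x y : X) : Rabs (hinner X x y) <= hnorm x * hnorm y.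
Proof.
  assert (H : hinner X x y * hinner X x y <= hinner X x x * hinner X y y).
  { apply quad. apply hinner_pos. intros t.
    assert (P := hinner_pos X (hsub x (hscal X t y))). expand.
    rewrite (hinner_sym X y x) in P. lra. }
  rewrite <- !hnorm_sq in H.
  apply Rsqr_incr_0_var. rewrite <- Rsqr_abs. unfold Rsqr. nra.
  apply Rmult_le_pos; apply hnorm_ge0.
Qed.

Lemma CS' {X : PreHilbert} (x y : X) : hinner X x y <= hnorm x * hnorm y.
Proof. generalize (CS x y) (Rle_abs (hinner X x y)). lra. Qed.
Lemma CS'' {X : PreHilbert} (x y : X) : - (hnorm x * hnorm y) <= hinner X x y.
Proof. generalize (CS x y) (Rle_abs (- hinner X x y)). rewrite Rabs_Ropp. lra. Qed.

Lemma hnorm_scal {X : PreHilbert} a (x : X) : hnorm (hscal X a x) = Rabs a * hnorm x.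
Proof.
  unfold hnorm. rewrite hinner_scal_l, isr, <- Rmult_assoc, sqrt_mult.
  replace (a*a) with (Rsqr a) by reflexivity.
  rewrite sqrt_Rsqr_abs. reflexivity. apply Rle_0_sqr. apply hinner_pos.
Qed.

Lemma norm_lt_sq {X : PreHilbert} (x : X) e : 0 < e -> hinner X x x < e*e -> hnorm x < e.
Proof. intros. rewrite <- hnorm_sq in H0. generalize (hnorm_ge0 x). nra. Qed.
Lemma norm_le_sq {X : PreHilbert} (x : X) e : 0 <= e -> hinner X x x <= e*e -> hnorm x <= e.
Proof. intros. rewrite <- hnorm_sq in H0. generalize (hnorm_ge0 x). nra. Qed.

Lemma eps_le (a b : R) : (forall g, 0 < g -> a <= b + g) -> a <= b.
Proof. intros H. destruct (Rle_dec a b). auto. specialize (H ((a-b)/2)). lra. Qed.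

Lemma quad0 (B C : R) : 0 <= C -> (forall t, 0 <= t*B + t*t*C) -> B = 0.
Proof.
  intros HC H. assert ((-B/2)*(-B/2) <= 0*C).
  { apply quad; auto. intros t. specialize (H t). lra. }
  nra.
Qed.

Lemma A_mon {X : PreHilbert} (F : X -> X) (A : X -> X) x0 :
  monotone F -> frechet_deriv_at F x0 A -> forall v, 0 <= hinner X (A v) v.
Proof.
  intros Hm [[Ha [Hs _]] Hd] v.
  apply eps_le. intros g Hg.
  set (eta := g / (hinner X v v + 1)).
  assert (Hvv := hinner_pos X v).
  assert (He : 0 < eta) by (unfold eta; apply Rdiv_lt_0_compat; lra).
  destruct (Hd eta He) as [de [Hde Hde']].
  set (t := de / (2 * (hnorm v + 1))).
  assert (Hnv := hnorm_ge0 v).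
  assert (Ht : 0 < t) by (unfold t; apply Rdiv_lt_0_compat; lra).
  assert (Htv : hnorm (hscal X t v) < de).
  { rewrite hnorm_scal, Rabs_pos_eq by lra. unfold t.
    apply Rmult_lt_reg_r with (2*(hnorm v + 1)). lra.
    field_simplify. nra. lra. }
  specialize (Hde' _ Htv). rewrite Hs in Hde'.
  rewrite hnorm_scal, Rabs_pos_eq in Hde' by lra.
  assert (Hcs := CS' (hsub (hsub (F (hadd X x0 (hscal X t v))) (F x0)) (hscal X t (A v))) v).
  assert (Hmo := Hm (hadd X x0 (hscal X t v)) x0).
  assert (Hn2 := hnorm_sq v).
  expand.
  assert (K : hinner X (F (hadd X x0 (hscal X t v))) v - hinner X (F x0) v - t * hinner X (A v) v
     <= eta * (t * (hnorm v)) * hnorm v).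
  { eapply Rle_trans. apply Hcs. apply Rmult_le_compat_r; auto. }
  assert (K2 : 0 <= t * (hinner X (F (hadd X x0 (hscal X t v))) v - hinner X (F x0) v)) by lra.
  assert (K3 : 0 <= hinner X (F (hadd X x0 (hscal X t v))) v - hinner X (F x0) v).
  { apply Rmult_le_reg_l with t; lra. }
  assert (K4 : - (eta * hinner X v v) <= hinner X (A v) v).
  { apply Rmult_le_reg_l with t. auto. rewrite <- Hn2. nra. }
  assert (eta * hinner X v v < g).
  { unfold eta. apply Rmult_lt_reg_r with (hinner X v v + 1). lra.
    field_simplify; lra. }
  lra.
Qed.

Lemma bound_lem {X : PreHilbert} (F : X -> X) a b c alpha :
  monotone F -> 0 < alpha -> hadd X (F a) (hscal X alpha (hsub a c)) = F b ->
  hinner X (hsub a b) (hsub a b) + hinner X (hsub b c) (hsub a b) <= 0.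
Proof.
  intros Hm Ha E.
  assert (HF : forall v, hinner X (F b) v = hinner X (F a) v + alpha * (hinner X a v - hinner X c v)).
  { intros v. rewrite <- E. expand. ring. }
  assert (M := Hm a b). expand. rewrite !HF in M.
  apply Rmult_le_reg_l with alpha. auto. lra.
Qed.

Lemma bound_norm {X : PreHilbert} (e d : X) :
  hinner X e e + hinner X d e <= 0 -> hnorm e <= hnorm d.
Proof.
  intros H. assert (C := CS'' d e). rewrite <- hnorm_sq in H.
  generalize (hnorm_ge0 e) (hnorm_ge0 d). nra.
Qed.

Lemma inv_small (x : R) : 0 < x -> exists N, forall n, (N <= n)%nat -> / INR (S n) < x.
Proof.
  intros Hx. destruct (archimed_cor1 x Hx) as [N [H1 H2]]. exists N. intros n Hn.
  eapply Rle_lt_trans; [|apply H1]. apply Rinv_le_contravar.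
  apply lt_0_INR; auto. apply le_INR. lia.
Qed.

Lemma closure_range {X : PreHilbert} (HC : complete X) (A : X -> X)
  (HA : bounded_linear A) (Amon : forall v, 0 <= hinner X (A v) v) (d : X)
  (Horth : forall v, A v = hzero X -> hinner X d v = 0) :
  forall eps, 0 < eps -> exists w, hnorm (hsub d (A w)) <= eps.
Proof.
  destruct HA as [Aadd [Ascal _]].
  set (f := fun w => hinner X (hsub d (A w)) (hsub d (A w))).
  set (E := fun r => exists w, r = - f w).
  destruct (completeness E) as [m [Hub Hlub]].
  { exists 0. intros r [w ->]. unfold f. generalize (hinner_pos X (hsub d (A w))). lra. }
  { exists (- f (hzero X)). exists (hzero X). reflexivity. }
  set (dl := - m).
  assert (H1 : forall w, dl <= f w).
  { intros w. unfold dl. assert (E (- f w)) by (exists w; reflexivity).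
    specialize (Hub _ H). lra. }
  assert (H2 : forall g, 0 < g -> exists w, f w < dl + g).
  { intros g Hg. apply NNPP. intros Hn.
    assert (is_upper_bound E (m - g)).
    { intros r [w ->]. destruct (Rle_dec (- f w) (m - g)); auto.
      exfalso. apply Hn. exists w. unfold dl. lra. }
    specialize (Hlub _ H). lra. }
  assert (Hpos : forall n, 0 < / INR (S n)).
  { intros n. apply Rinv_0_lt_compat, lt_0_INR. lia. }
  set (ws := fun n => proj1_sig (constructive_indefinite_description _ (H2 _ (Hpos n)))).
  assert (Hws : forall n, f (ws n) < dl + / INR (S n)).
  { intros n. unfold ws. destruct constructive_indefinite_description. auto. }
  clearbody ws. clear H2.
  set (v := fun n => A (ws n)).
  assert (Hcau : forall n k, hinner X (hsub (v n) (v k)) (hsub (v n) (v k))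
                  <= 2 * / INR (S n) + 2 * / INR (S k)).
  { intros n k.
    assert (M := H1 (hscal X (/2) (hadd X (ws n) (ws k)))).
    assert (Hn := Hws n). assert (Hk := Hws k).
    unfold f, v in *. rewrite Ascal, Aadd in M.
    expand.
    pose proof (hinner_sym X d (A (ws n))). pose proof (hinner_sym X d (A (ws k))).
    pose proof (hinner_sym X (A (ws n)) (A (ws k))). lra. }
  destruct (HC v) as [p Hp].
  { intros eps Heps.
    destruct (inv_small (eps * eps / 4)) as [N HN]. nra.
    exists N. intros n k Hn Hk. apply norm_lt_sq. auto.
    specialize (HN n Hn) as Hn'. specialize (HN k Hk) as Hk'.
    specialize (Hcau n k). lra. }
  set (q := hsub d p).
  assert (C1 : forall u, hinner X q (A u) = 0).
  { intros u.
    set (K := hinner X (A u) (A u)).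
    assert (HK : 0 <= K) by apply hinner_pos.
    apply Rmult_eq_reg_l with (-2); [|lra]. rewrite Rmult_0_r.
    apply (quad0 _ K HK). intros t.
    apply eps_le. intros g Hg.
    set (g' := g / (2 * (2 * Rabs t * hnorm (A u) + 1))).
    assert (Hna := hnorm_ge0 (A u)). assert (Hat := Rabs_pos t).
    assert (Hg' : 0 < g') by (unfold g'; apply Rdiv_lt_0_compat; nra).
    destruct (Hp g' Hg') as [N1 HN1].
    destruct (inv_small (g/2)) as [N2 HN2]. lra.
    set (n := max N1 N2).
    specialize (HN1 n (Nat.le_max_l _ _)). specialize (HN2 n (Nat.le_max_r _ _)).
    assert (M := H1 (hadd X (ws n) (hscal X t u))).
    assert (Hn := Hws n).
    assert (Cs := CS (hsub (v n) p) (A u)).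
    assert (T : Rabs (t * hinner X (hsub (v n) p) (A u)) <= g / 4).
    { rewrite Rabs_mult.
      apply Rle_trans with (Rabs t * (g' * hnorm (A u))).
      apply Rmult_le_compat_l; auto. eapply Rle_trans. apply Cs.
      apply Rmult_le_compat_r; auto; lra.
      unfold g'. apply Rmult_le_reg_r with (2 * (2 * Rabs t * hnorm (A u) + 1)). nra.
      field_simplify; nra. }
    assert (T2 := Rle_abs (t * hinner X (hsub (v n) p) (A u))).
    unfold f, v, q in *. rewrite Aadd, Ascal in M. unfold K.
    expand.
    rewrite (hinner_sym X (A u) d), (hinner_sym X (A u) (A (ws n))), (hinner_sym X (A (ws n)) d) in *. assert (2*t*(hinner X d (A u) - hinner X (A (ws n)) (A u)) <= t*t*hinner X (A u) (A u) + / INR (S n)) by lra. lra. }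
  assert (C2 : A q = hzero X).
  { assert (B0 : forall u, hinner X (A q) u = 0).
    { intros u. apply Rmult_eq_reg_l with 1; [|lra]. rewrite Rmult_0_r.
      apply (quad0 _ (hinner X (A u) u)). apply Amon.
      intros t. assert (M := Amon (hadd X q (hscal X t u))).
      rewrite Aadd, Ascal in M. assert (Z1 := C1 q). assert (Z2 := C1 u).
      rewrite !hinner_add_l, !hinner_scal_l, !iar, !isr in M.
      rewrite (hinner_sym X q (A q)) in Z1. rewrite (hinner_sym X q (A u)) in Z2. nra. }
    apply hinner_def. apply B0. }
  assert (C3 : hinner X d q = 0) by (apply Horth; auto).
  assert (C4 : hinner X p q = 0).
  { assert (Hq := hnorm_ge0 q).
    assert (forall g, 0 < g -> Rabs (hinner X p q) <= g).
    { intros g Hg. destruct (Hp (g / (hnorm q + 1))) as [N HN].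
      apply Rdiv_lt_0_compat; lra.
      specialize (HN N (le_n _)).
      assert (Cs := CS (hsub (v N) p) q).
      assert (Z := C1 (ws N)). rewrite hinner_sym in Z. fold (v N) in Z.
      assert (Eq : hinner X (hsub (v N) p) q = - hinner X p q).
      { unfold hsub at 1. rewrite hinner_add_l, iol, Z. ring. }
      rewrite Eq, Rabs_Ropp in Cs. eapply Rle_trans. apply Cs.
      apply Rle_trans with (g / (hnorm q + 1) * hnorm q).
      apply Rmult_le_compat_r; lra.
      apply Rmult_le_reg_r with (hnorm q + 1). lra. field_simplify; nra. }
    destruct (Req_dec (hinner X p q) 0); auto. exfalso.
    specialize (H (Rabs (hinner X p q) / 2)).
    assert (0 < Rabs (hinner X p q)) by (apply Rabs_pos_lt; auto). lra. }
  assert (C5 : q = hzero X).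
  { apply hinner_def. unfold q in *. expand. lra. }
  intros eps Heps. destruct (Hp eps Heps) as [N HN]. specialize (HN N (le_n _)).
  exists (ws N). apply norm_le_sq. lra.
  assert (Z : forall x, hinner X d x = hinner X p x).
  { intros x. assert (hinner X q x = 0) by (rewrite C5; apply izl).
    unfold q in H. expand. lra. }
  assert (Hs := hnorm_sq (hsub (v N) p)). unfold v in *.
  assert (hnorm (hsub (A (ws N)) p) * hnorm (hsub (A (ws N)) p) <= eps * eps).
  { generalize (hnorm_ge0 (hsub (A (ws N)) p)). nra. }
  rewrite Hs in H. expand. rewrite !Z.
  pose proof (hinner_sym X p (A (ws N))). pose proof (Z p). pose proof (Z (A (ws N))). pose proof (hinner_sym X p d). pose proof (hinner_sym X (A (ws N)) d). lra.
Qed.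

Theorem corollary5p2
  (X : PreHilbert) (HX : separable_hilbert X)
  (F : X -> X) (DF : X -> X -> X) (xdag xbar y : X) (r k0 : R)
  (Hmono : monotone F) (Hhemi : hemicontinuous F)
  (Hy : F xdag = y)
  (Hr : hnorm (hsub xdag xbar) < r)
  (HC1 : C1_on_ball F DF xdag r)
  (Hnl : nonlinearity_condition DF xdag r k0)
  (Hk0 : k0 * hnorm (hsub xdag xbar) < 2)
  (Horth : forall v : X, DF xdag v = hzero X -> hinner X (hsub xdag xbar) v = 0)
  (xa : R -> X)
  (Hxa : forall alpha, 0 < alpha ->
     hadd X (F (xa alpha)) (hscal X alpha (hsub (xa alpha) xbar)) = y) :
  forall eps, 0 < eps -> exists delta, 0 < delta /\
    forall alpha, 0 < alpha < delta -> hnorm (hsub (xa alpha) xdag) < eps.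
Proof.
  destruct HC1 as [Hder _].
  set (A := DF xdag). set (b := xdag). set (c := xbar). set (d := hsub b c).
  assert (Hball : in_ball xdag r xdag).
  { unfold in_ball, hnorm, hsub. rewrite hadd_opp, izl, sqrt_0.
    generalize (hnorm_ge0 (hsub xdag xbar)). lra. }
  assert (Hd := Hder xdag Hball). fold A in Hd.
  assert (Amon := A_mon F A xdag Hmono Hd).
  destruct Hd as [HA Hfr].
  assert (Hclo := closure_range (proj1 HX) A HA Amon d Horth).
  destruct HA as [Aadd [Ascal _]].
  intros eps0 Heps0.
  set (D := hnorm d). assert (HD : 0 <= D) by apply hnorm_ge0.
  set (ep := eps0 * eps0 / (8 * (D + 1))).
  assert (Hep : 0 < ep) by (unfold ep; apply Rdiv_lt_0_compat; nra).
  destruct (Hclo ep Hep) as [w Hw].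
  set (z := A w). set (W := hnorm w). set (Z := hnorm z).
  assert (HW : 0 <= W) by apply hnorm_ge0. assert (HZ : 0 <= Z) by apply hnorm_ge0.
  set (eta := eps0 * eps0 / (8 * (W + 1) * (D + W + 1))).
  assert (Heta : 0 < eta) by (unfold eta; apply Rdiv_lt_0_compat; nra).
  destruct (Hfr eta Heta) as [de [Hde Hfr']].
  set (s := Rmin 1 (Rmin (eps0 * eps0 / (8 * (Z * W + 1))) (de / (2 * (W + 1))))).
  assert (Hs1 : s <= 1) by apply Rmin_l.
  assert (Hs2 : s <= eps0 * eps0 / (8 * (Z * W + 1)))
    by (eapply Rle_trans; [apply Rmin_r|apply Rmin_l]).
  assert (Hs3 : s <= de / (2 * (W + 1)))
    by (eapply Rle_trans; [apply Rmin_r|apply Rmin_r]).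
  assert (Hs : 0 < s).
  { unfold s. apply Rmin_pos. lra. apply Rmin_pos; apply Rdiv_lt_0_compat; try nra. }
  exists (s * eps0 * eps0 / (16 * (D + 1) * (D + W + 1))).
  split. { apply Rdiv_lt_0_compat; (apply Rmult_lt_0_compat; [apply Rmult_lt_0_compat|]; lra). }
  intros alpha [Ha Hal].
  set (a := xa alpha).
  assert (Hx := Hxa alpha Ha). fold a c in Hx. rewrite <- Hy in Hx. fold b in Hx.
  assert (Hbd := bound_lem F a b c alpha Hmono Ha Hx).
  set (e := hsub a b). fold e d in Hbd.
  set (E := hnorm e). assert (HE : 0 <= E) by apply hnorm_ge0.
  assert (HED : E <= D) by (apply bound_norm; auto).
  set (h := hscal X (- s) w).
  assert (Hh : hnorm h < de).
  { unfold h. rewrite hnorm_scal, Rabs_Ropp, Rabs_pos_eq by lra. fold W.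
    apply Rle_lt_trans with (de / (2 * (W + 1)) * W). apply Rmult_le_compat_r; auto.
    apply Rmult_lt_reg_r with (2 * (W + 1)). lra. field_simplify; nra. }
  assert (Hrho := Hfr' h Hh).
  set (G := F (hadd X b h)).
  fold b G in Hrho.
  set (rho := hsub (hsub G (F b)) (A h)). fold rho in Hrho.
  set (Rn := hnorm rho). assert (HR : 0 <= Rn) by apply hnorm_ge0.
  assert (HRb : Rn <= eta * s * W).
  { unfold Rn. eapply Rle_trans. apply Hrho. unfold h. rewrite hnorm_scal, Rabs_Ropp, Rabs_pos_eq by lra.
    fold W. lra. }
  assert (HAh : A h = hscal X (- s) z) by (unfold h; apply Ascal).
  assert (I1 : forall V, hinner X (F a) V = hinner X (F b) V - alpha * hinner X (hsub a c) V).
  { intros V. rewrite <- Hx. expand. ring. }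
  assert (I2 : forall V, hinner X G V = hinner X rho V + hinner X (F b) V - s * hinner X z V).
  { intros V. unfold rho. rewrite HAh. expand. ring. }
  assert (I3 : forall V, hinner X (hsub a c) V = hinner X e V + hinner X d V).
  { intros V. unfold e, d. expand. ring. }
  assert (I4 : forall V, hinner X V (hsub a (hadd X b h)) = hinner X V e + s * hinner X V w).
  { intros V. unfold e, h. expand. ring. }
  assert (I5 : forall V, hinner X (hsub (F a) G) V = hinner X (F a) V - hinner X G V).
  { intros V. expand. ring. }
  assert (I6 : hinner X d e = hinner X z e + hinner X (hsub d z) e).
  { expand. ring. }
  assert (M := Hmono a (hadd X b h)). fold G in M.
  rewrite I4, !I5, !I1, !I2, !I3 in M.
  assert (B1 := CS'' d e). fold D E in B1.
  assert (B2 := CS'' e w). fold E W in B2.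
  assert (B3 := CS'' d w). fold D W in B3.
  assert (B4 := CS'' rho e). fold Rn E in B4.
  assert (B5 := CS'' rho w). fold Rn W in B5.
  assert (B6 := CS' z w). fold Z W in B6.
  assert (B7 := CS'' (hsub d z) e). fold E in B7.
  assert (B8 := hinner_pos X e).
  assert (B9 : hnorm (hsub d z) * E <= ep * D).
  { apply Rle_trans with (ep * E). apply Rmult_le_compat_r; auto. apply Rmult_le_compat_l; lra. }
  set (ee := hinner X e e) in *. set (dE := hinner X d e) in *.
  set (ew := hinner X e w) in *. set (dw := hinner X d w) in *.
  set (re := hinner X rho e) in *. set (rw := hinner X rho w) in *.
  set (zE := hinner X z e) in *. set (zw := hinner X z w) in *.
  set (dz := hinner X (hsub d z) e) in *.
  assert (S1 : s * (- zE) <= alpha * (D * D) + Rn * D + alpha * s * (2 * D * W)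
                + s * (Rn * W) + s * s * (Z * W)).
  { assert (alpha * (- (ee + dE)) <= alpha * (D * D)).
    { apply Rmult_le_compat_l. lra. nra. }
    assert (alpha * s * (- (ew + dw)) <= alpha * s * (2 * D * W)).
    { apply Rmult_le_compat_l. nra. nra. }
    assert (s * (- rw) <= s * (Rn * W)) by (apply Rmult_le_compat_l; lra).
    assert (s * s * zw <= s * s * (Z * W)) by (apply Rmult_le_compat_l; nra).
    assert (- re <= Rn * D) by nra.
    nra. }
  assert (S2 : ee <= - zE + ep * D) by lra.
  assert (S3 : s * ee <= alpha * (D * D) + alpha * s * (2 * D * W) + s * (eta * W * (D + W))
               + s * s * (Z * W) + s * (ep * D)).
  { assert (Rn * D + s * (Rn * W) <= s * (eta * W * (D + W))).
    { assert (Rn * (D + s * W) <= eta * s * W * (D + W)).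
      { apply Rmult_le_compat; nra. }
      nra. }
    nra. }
  apply norm_lt_sq; auto. fold e ee.
  assert (T1 : ep * D <= eps0 * eps0 / 8).
  { unfold ep. apply Rmult_le_reg_r with (8 * (D + 1)). lra. field_simplify; nra. }
  assert (T2 : eta * W * (D + W) <= eps0 * eps0 / 8).
  { unfold eta. apply Rmult_le_reg_r with (8 * (W + 1) * (D + W + 1)). nra.
    field_simplify; try nra. }
  assert (T3 : s * (Z * W) <= eps0 * eps0 / 8).
  { apply Rle_trans with (eps0 * eps0 / (8 * (Z * W + 1)) * (Z * W)). apply Rmult_le_compat_r; nra.
    apply Rmult_le_reg_r with (8 * (Z * W + 1)). nra. field_simplify; nra. }
  set (K := (16 * (D + 1) * (D + W + 1))) in *.
  assert (HK : 0 < K) by (unfold K; nra).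
  assert (T4 : alpha * K < s * eps0 * eps0).
  { apply Rmult_lt_reg_r with (/ K). apply Rinv_0_lt_compat; auto.
    replace (alpha * K * / K) with alpha by (field; lra). exact Hal. }
  assert (T5 : alpha * (D * D) + alpha * s * (2 * D * W) <= alpha * K / 8).
  { assert (Q0 : 0 <= D * W) by (apply Rmult_le_pos; lra).
    assert (Q1 : s * (D * W) <= 1 * (D * W)) by (apply Rmult_le_compat_r; lra).
    assert (Q : D * D + s * (2 * D * W) <= K / 8) by (unfold K; nra).
    apply Rmult_le_compat_l with (r := alpha) in Q; lra. }
  assert (T6 : s * ee < s * (eps0 * eps0)).
  { assert (alpha * K / 8 < s * eps0 * eps0 / 8) by lra. nra. }
  apply Rmult_lt_reg_l with s; auto.
Qed.
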